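(* Let $\mathbb{F}\in\{\mathbb{R},\mathbb{C}\}$ and let $M$ be the $n\times n$ companion matrix of a monic polynomial $f(x)=x^n+a_1x^{n-1}+\cdots+a_n\in\mathbb{F}[x]$. Then there is a tensor $(O;N)$ over $\mathbb{F}$ of rank at most $1$ such that $(E_n;M)-(O;N)$ is diagonalizable over $\mathbb{F}$. In particular $\mathrm{rank}_{\mathbb{F}}(E_n;M)\le n+1$.
   Context: The companion matrix of $f(x)=x^n+a_1x^{n-1}+\cdots+a_{n-1}x+a_n$ is the $n\times n$ matrix with ones on the subdiagonal (entries $(i+1,i)$), last column $(-a_n,-a_{n-1},\dots,-a_1)^T$, and zeros elsewhere. For matrices $A,B$ of the same size $m\times n$, $(A;B)$ denotes the $m\times n\times 2$ tensor with slices $A,B$; tensors are added slicewise. A rank-one $m\times n\times 2$ tensor over $\mathbb{F}$ has the form $(\alpha\,\mathbf{a}\mathbf{b}^T;\beta\,\mathbf{a}\mathbf{b}^T)$ with nonzero $\mathbf{a},\mathbf{b}$ and $(\alpha,\beta)\neq 0$; $\mathrm{rank}_{\mathbb{F}}(T)$ is the minimal number of rank-one tensors summing to $T$. $E_n$ is the identity matrix. An $m\times n\times 2$ tensor $(A;B)$ is diagonalizable over $\mathbb{F}$ if there are nonsingular $P,Q$ over $\mathbb{F}$ and diagonal $D_A,D_B$ with $PAQ=(D_A,O)$, $PBQ=(D_B,O)$ if $m\le n$, and $PAQ=(D_A,O)^T$, $PBQ=(D_B,O)^T$ if $m>n$. *)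

(* Defs.v *)
From HB Require Import structures.
From mathcomp Require Import all_boot all_order all_algebra.
Set Implicit Arguments. Unset Strict Implicit. Unset Printing Implicit Defensive.
Import GRing.Theory Num.Theory.
Local Open Scope ring_scope.

(* Companion matrix (paper's convention) of the monic polynomial
   f = x^n + a_1 x^(n-1) + ... + a_n, i.e. a_k = f`_(n-k):
   ones on the subdiagonal (entries (i+1,i)), last column
   (-a_n, ..., -a_1)^T = (-f`_0, ..., -f`_(n-1))^T, zeros elsewhere. *)
Definition companion (F : nzRingType) (n : nat) (f : {poly F}) : 'M[F]_n :=
  \matrix_(i < n, j < n)
    if (j == n.-1 :> nat) then - f`_i else ((i : nat) == j.+1)%:R.

(* An m x n x 2 tensor (A;B) is a pair of m x n matrices. *)
Definition tensor (F : nzRingType) (m n : nat) := ('M[F]_(m, n) * 'M[F]_(m, n))%type.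

Definition tadd (F : nzRingType) m n (T U : tensor F m n) : tensor F m n :=
  (T.1 + U.1, T.2 + U.2).

Definition tsub (F : nzRingType) m n (T U : tensor F m n) : tensor F m n :=
  (T.1 - U.1, T.2 - U.2).

Definition tzero (F : nzRingType) m n : tensor F m n := (0, 0).

Definition rank_one (F : nzRingType) m n (T : tensor F m n) : Prop :=
  exists (alpha beta : F) (a : 'cV[F]_m) (b : 'cV[F]_n),
    [/\ a != 0, b != 0, (alpha != 0) || (beta != 0) &
        T = (alpha *: (a *m b^T), beta *: (a *m b^T))].

Definition tensor_rank_le (F : nzRingType) m n (T : tensor F m n) (r : nat) : Prop :=
  exists s : seq (tensor F m n),
    [/\ (size s <= r)%N, (forall U, U \in s -> rank_one U) &
        T = foldr (@tadd F m n) (tzero F m n) s].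

(* Diagonalizable m x n x 2 tensor: nonsingular P, Q with P A Q and P B Q of the
   form (D,O) resp. (D,O)^T with D diagonal, i.e. all entries (i,j) with
   i <> j vanish. *)
Definition tensor_diagonalizable (F : fieldType) m n (T : tensor F m n) : Prop :=
  exists (P : 'M[F]_m) (Q : 'M[F]_n),
    [/\ P \in unitmx, Q \in unitmx,
        (forall (i : 'I_m) (j : 'I_n), (i : nat) != j -> (P *m T.1 *m Q) i j = 0) &
        (forall (i : 'I_m) (j : 'I_n), (i : nat) != j -> (P *m T.2 *m Q) i j = 0)].

(* Main.v *)
Require Import Defs.
From HB Require Import structures.
From mathcomp Require Import all_boot all_order all_algebra.
Import GRing.Theory Num.Theory.
Local Open Scope ring_scope.

Section S.
Variable F : numFieldType.
Variable n : nat.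

Definition lam (k : 'I_n) : F := (k : nat)%:R.
Definition gp : {poly F} := \prod_(k < n) ('X - (lam k)%:P).
Definition VV : 'M[F]_n := \matrix_(k < n, i < n) lam k ^+ i.

Lemma size_gp : size gp = n.+1.
Proof. by rewrite /gp size_prod_XsubC -[in RHS](card_ord n) cardT enumT. Qed.

Lemma monic_gp : gp \is monic.
Proof. exact: monic_prod_XsubC. Qed.

Lemma root_gp k : gp.[lam k] = 0.
Proof.
rewrite /gp horner_prod (bigD1 k) //= !hornerE subrr mul0r //.
Qed.

Lemma VV_unit : VV \in unitmx.
Proof.
have -> : VV = (Vandermonde n (\row_k lam k))^T.
  by apply/matrixP => i j; rewrite !mxE.
rewrite unitmxE det_tr det_Vandermonde unitfE; apply/prodf_neq0 => i _.
apply/prodf_neq0 => j ij; rewrite !mxE /lam -natrB ?(ltnW ij) //.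
by rewrite pnatr_eq0 subn_eq0 -ltnNge.
Qed.

Lemma VV_comp : VV *m companion n gp = diag_mx (\row_k lam k) *m VV.
Proof.
apply/matrixP => k j; rewrite mul_diag_mx !mxE.
under eq_bigr do rewrite !mxE.
case: eqP => Hj.
  have n0 : (0 < n)%N by apply: leq_ltn_trans (ltn_ord j).
  have := root_gp k; rewrite horner_coef size_gp big_ord_recr /=.
  have -> : gp`_n = 1 by have := monic_gp; rewrite monicE /lead_coef size_gp => /eqP.
  rewrite mul1r => /eqP; rewrite addr_eq0 => /eqP E.
  rewrite Hj -exprS prednK // -[_ ^+ n]opprK -E -sumrN.
  by apply: eq_bigr => i _; rewrite mulrN mulrC.
have Hj1 : (j.+1 < n)%N.
  rewrite ltn_neqAle ltn_ord andbT; apply/eqP => E; apply: Hj; exact: (congr1 predn E).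
rewrite (bigD1 (Ordinal Hj1)) //= eqxx mulr1 big1 ?addr0 ?exprS // => i Hi.
by rewrite (_ : (i == j.+1 :> nat) = false) ?mulr0 //; apply/negP => /eqP E; move: Hi; rewrite -val_eqE /= E eqxx.
Qed.

Lemma colrow_sum (A B : 'M[F]_n) : \sum_k (col k A *m row k B) = A *m B.
Proof.
apply/matrixP => i j; rewrite summxE mxE; apply: eq_bigr => k _.
by rewrite mxE big_ord1 !mxE.
Qed.

End S.

Lemma foldr_tadd_z (F : nzRingType) m n (s : seq (tensor F m n)) z :
  foldr (@tadd F m n) z s = tadd (foldr (@tadd F m n) (tzero F m n) s) z.
Proof.
elim: s => [|x s IH] /=; first by case: z => a b; rewrite /tadd /= !add0r.
by rewrite IH /tadd /= !addrA.
Qed.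

Lemma foldr_tadd_cat (F : nzRingType) m n (s1 s2 : seq (tensor F m n)) :
  foldr (@tadd F m n) (tzero F m n) (s1 ++ s2) =
  tadd (foldr (@tadd F m n) (tzero F m n) s1) (foldr (@tadd F m n) (tzero F m n) s2).
Proof. by rewrite foldr_cat foldr_tadd_z. Qed.

Lemma foldr_tadd_map (F : nzRingType) m n I (r : seq I) (h : I -> tensor F m n) :
  foldr (@tadd F m n) (tzero F m n) (map h r) =
  (\sum_(k <- r) (h k).1, \sum_(k <- r) (h k).2).
Proof.
elim: r => [|x r IH] /=; first by rewrite !big_nil.
by rewrite IH !big_cons.
Qed.

Theorem mainTheorem2 (F : numFieldType) (n : nat) (f : {poly F}) :
  f \is monic -> size f = n.+1 ->
  (exists N : 'M[F]_n,
     tensor_rank_le ((0 : 'M[F]_n), N) 1 /\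
     tensor_diagonalizable (tsub ((1%:M : 'M[F]_n), companion n f) (0, N)))
  /\ tensor_rank_le ((1%:M : 'M[F]_n), companion n f) n.+1.
Proof.
move=> fm sf.
set C := companion n (gp F n).
set N := companion n f - C.
set W := invmx (VV F n).
have Vu := VV_unit F n.
have HN : tensor_rank_le ((0:'M_n), N) 1.
  set a : 'cV[F]_n := \col_i ((gp F n)`_i - f`_i).
  have Ne : N = \matrix_(i,j) (if (j == n.-1 :> nat) then a i 0 else 0).
    apply/matrixP => i j; rewrite !mxE; case: ifP => _; last by rewrite subrr.
    by rewrite opprK addrC.
  case: (eqVneq a 0) => Ha.
    exists [::]; split => //=; rewrite /tzero; congr pair; rewrite Ne.
    move/matrixP: Ha => Ha.
    by apply/matrixP => i j; have := Ha i 0; rewrite !mxE => ->; case: ifP.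
  have n0 : (0 < n)%N.
    case: (posnP n) => // n0; case/eqP: Ha; apply/matrixP => i.
    by have := leq_trans (ltn_ord i) (eq_leq n0).
  have Hn1 : (n.-1 < n)%N by rewrite prednK.
  set b : 'cV[F]_n := \col_j ((j : nat) == n.-1)%:R.
  exists [:: ((0:F) *: (a *m b^T), 1 *: (a *m b^T))]; split => //.
    move=> U; rewrite inE => /eqP ->; exists 0, 1, a, b; split => //.
      apply/negP => /eqP/matrixP/(_ (Ordinal Hn1) 0); rewrite !mxE eqxx /=.
      by move/eqP; rewrite oner_eq0.
    by rewrite oner_neq0 orbT.
  rewrite /= scale0r scale1r /tadd /= !addr0; congr pair; rewrite Ne.
  apply/matrixP => i j; rewrite !mxE big_ord1 !mxE.
  by case: ifP => _; rewrite ?mulr1 ?mulr0.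
have C_eq : C = W *m diag_mx (\row_k lam F n k) *m VV F n.
  by rewrite -mulmxA -VV_comp mulmxA mulVmx // mul1mx.
have fe : companion n f = C + N by rewrite /N addrC subrK.
split.
  exists N; split => //; exists (VV F n), W; split; rewrite ?unitmx_inv //.
    move=> i j ij; have ij' : (i == j) = false := negbTE ij.
    by rewrite /= subr0 mulmx1 mulmxV // mxE ij'.
  move=> i j ij; have ij' : (i == j) = false := negbTE ij.
  rewrite /= /N opprB addrC subrK VV_comp -mulmxA mulmxV // mulmx1.
  by rewrite mxE ij' mulr0n.
move: HN => [s0 [Hs0 Hr0 Hf0]].
set h := fun k : 'I_n => ((1:F) *: (col k W *m row k (VV F n)),
                          lam F n k *: (col k W *m row k (VV F n))).
exists (map h (index_enum 'I_n) ++ s0); split.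
- have E : size (index_enum (ordinal n)) = n by rewrite -[RHS](card_ord n) cardT enumT.
  rewrite size_cat size_map E.
  by rewrite -addn1 leq_add2l.
- move=> U; rewrite mem_cat => /orP [/mapP [k _ ->]|]; last exact: Hr0.
  exists 1, (lam F n k), (col k W), (row k (VV F n))^T; rewrite trmxK; split => //.
  + apply/negP => /eqP Hc.
    have : ((VV F n) *m W) k k = 0.
      rewrite mxE big1 // => l _.
      by have := congr1 (fun M : 'cV_n => M l 0) Hc; rewrite !mxE => ->; rewrite mulr0.
    by rewrite mulmxV // mxE eqxx mulr1n => /eqP; rewrite oner_eq0.
  + rewrite trmx_eq0; apply/negP => /eqP Hc.
    have : ((VV F n) *m W) k k = 0.
      rewrite mxE big1 // => l _.
      by have := congr1 (fun M : 'rV_n => M 0 l) Hc; rewrite !mxE => ->; rewrite mul0r.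
    by rewrite mulmxV // mxE eqxx mulr1n => /eqP; rewrite oner_eq0.
  + by rewrite oner_neq0.
- rewrite foldr_tadd_cat foldr_tadd_map -Hf0 /tadd /=; congr pair.
    under eq_bigr do rewrite scale1r.
    by rewrite colrow_sum mulVmx // addr0.
  rewrite fe C_eq; congr (_ + _).
  rewrite -colrow_sum; apply: eq_bigr => k _.
  apply/matrixP => i j; rewrite mul_mx_diag !mxE !big_ord1 !mxE.
  by rewrite mulrCA mulrA.
Qed.
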